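(* Let $\Gamma$ be a highly-regular graph with $3\le\operatorname{diam}(\Gamma)<\infty$. Then the complement $\overline{\Gamma}$ is a highly-regular graph with $\operatorname{diam}(\overline{\Gamma})=2$ which is not distance-regular.
   Context: All graphs are finite, undirected, without loops or multiple edges; the diameter of a disconnected graph is $\infty$. $\overline{\Gamma}$ has vertex set $V(\Gamma)$ and edges exactly the pairs of distinct vertices not adjacent in $\Gamma$. A graph $\Gamma$ of order $n$ is highly-regular with collapsed adjacency matrix (CAM) $C=[c_{i,j}]_{1\le i,j\le m}$, where $2\le m<n$ (the value $m=n$ is allowed only when $n=2$), if for every vertex $u$ there is a partition of $V(\Gamma)$ into nonempty sets $V_1(u)=\{u\},V_2(u),\dots,V_m(u)$ such that for all $i,j$, every vertex $y\in V_j(u)$ is adjacent to exactly $c_{i,j}$ vertices of $V_i(u)$. A connected graph $\Gamma$ is distance-regular if for all $u,v$ the numbers $|D_1(v)\cap D_{i-1}(u)|$, $|D_1(v)\cap D_i(u)|$, $|D_1(v)\cap D_{i+1}(u)|$ depend only on $i=d(u,v)$, where $D_i(u)=\{v:d(u,v)=i\}$. *)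

(* Defs.v *)
From mathcomp Require Import all_boot.
Set Implicit Arguments. Unset Strict Implicit. Unset Printing Implicit Defensive.

Section Graphs.
Variable T : finType.

Definition simple_graph (e : rel T) : Prop := symmetric e /\ irreflexive e.

Definition compl_graph (e : rel T) : rel T := fun x y => (x != y) && ~~ e x y.

Fixpoint ball (e : rel T) (k : nat) (u : T) : {set T} :=
  if k is k'.+1 then
    ball e k' u :|: [set y | [exists x in ball e k' u, e x y]]
  else [set u].

Definition sphere (e : rel T) (i : nat) (u : T) : {set T} :=
  if i is i'.+1 then ball e i'.+1 u :\: ball e i' u else [set u].

Definition connected_graph (e : rel T) : Prop := forall u v, exists k, v \in ball e k u.

Definition has_diam (e : rel T) (d : nat) : Prop :=
  (forall u v, v \in ball e d u) /\ exists u v, v \in sphere e d u.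

Definition highly_regular (e : rel T) : Prop :=
  exists (m : nat) (C : 'I_m -> 'I_m -> nat),
    ((2 <= m < #|T|) || ((m == #|T|) && (#|T| == 2))) /\
    forall u : T, exists f : T -> 'I_m,
      (* class of index 0 (i.e. V_1(u)) is exactly {u} *)
      (forall y, (nat_of_ord (f y) == 0) = (y == u)) /\
      (forall i : 'I_m, exists y, f y = i) /\
      (forall (i j : 'I_m) (y : T), f y = j ->
          #|[set x | e x y & f x == i]| = C i j).

Definition distance_regular (e : rel T) : Prop :=
  connected_graph e /\
  forall (i : nat) (u v u' v' : T),
    v \in sphere e i u -> v' \in sphere e i u' ->
      [/\ #|sphere e 1 v :&: sphere e i.-1 u| = #|sphere e 1 v' :&: sphere e i.-1 u'|,
          #|sphere e 1 v :&: sphere e i u| = #|sphere e 1 v' :&: sphere e i u'|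
        & #|sphere e 1 v :&: sphere e i.+1 u| = #|sphere e 1 v' :&: sphere e i.+1 u'|].

End Graphs.

(* Main.v *)
Require Import Defs.
From mathcomp Require Import all_boot.
Set Implicit Arguments. Unset Strict Implicit. Unset Printing Implicit Defensive.

Section Balls.
Variable U : finType.
Variable r : rel U.

Lemma in_ballS k u y : (y \in ball r k.+1 u) = (y \in ball r k u) || [exists x in ball r k u, r x y].
Proof. by rewrite /= in_setU inE. Qed.

Lemma in_ball0 u y : (y \in ball r 0 u) = (y == u).
Proof. by rewrite /= inE. Qed.

Lemma ball_sub k u : ball r k u \subset ball r k.+1 u.
Proof. by rewrite /= subsetUl. Qed.

Lemma ball_mono k l u : k <= l -> ball r k u \subset ball r l u.
Proof.
move=> kl; rewrite -(subnKC kl); elim: (l - k) => [|n IH]; first by rewrite addn0.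
by apply: subset_trans IH _; rewrite addnS ball_sub.
Qed.

Lemma ball_stab k u n : ball r k.+1 u = ball r k u -> ball r (k + n) u = ball r k u.
Proof.
move=> H; elim: n => [|n IH]; first by rewrite addn0.
by rewrite addnS -[in RHS]H /= IH.
Qed.

Lemma in_ball1 u x : (x \in ball r 1 u) = (x == u) || r u x.
Proof.
rewrite in_ballS in_ball0; congr (_ || _).
apply/existsP/idP => [[x0 /andP[]]|h]; first by rewrite in_ball0 => /eqP ->.
by exists u; rewrite in_ball0 eqxx.
Qed.

End Balls.

Section G.
Variable T : finType.
Variable e : rel T.
Hypothesis esym : symmetric e.
Hypothesis eirr : irreflexive e.
Variable m : nat.
Variable C : 'I_m -> 'I_m -> nat.

Definition hspec (u : T) (f : T -> 'I_m) :=
  (forall y, (nat_of_ord (f y) == 0) = (y == u)) /\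
  (forall i : 'I_m, exists y, f y = i) /\
  (forall (i j : 'I_m) (y : T), f y = j -> #|[set x | e x y & f x == i]| = C i j).

Definition R : rel 'I_m := fun a b => 0 < C a b.

Lemma spec_eq u f : hspec u f -> forall x, (f x == f u) = (x == u).
Proof.
move=> [h0 _] x.
have H : nat_of_ord (f u) = 0 by apply/eqP; rewrite h0.
by rewrite -val_eqE /= H h0.
Qed.

Lemma spec_root u u' f f' : hspec u f -> hspec u' f' -> f u = f' u'.
Proof.
move=> [h0 _] [h0' _]; apply: val_inj => /=.
have := h0 u; have := h0' u'; rewrite !eqxx => /eqP -> /eqP -> //.
Qed.

Lemma ball_index u f : hspec u f -> forall k y,
  (y \in ball e k u) = (f y \in ball R k (f u)).
Proof.
move=> hs; have [_ [_ hc]] := hs.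
elim=> [|k IH] y; first by rewrite !in_ball0 (spec_eq hs).
rewrite !in_ballS IH; congr (_ || _).
apply/existsP/existsP => [[x /andP[xb exy]]|[a /andP[ab]]].
  exists (f x); rewrite -IH xb /R -(hc (f x) (f y) y erefl) /=.
  by apply/card_gt0P; exists x; rewrite inE exy eqxx.
rewrite /R -(hc a (f y) y erefl) => /card_gt0P [x]; rewrite inE => /andP[exy /eqP fxa].
by exists x; rewrite IH fxa ab exy.
Qed.

Lemma card_sum (P Q : pred T) : #|[set x | P x && Q x]| = \sum_(x | Q x) P x.
Proof.
rewrite -sum1_card big_mkcond [RHS]big_mkcond; apply: eq_bigr => x _.
by rewrite inE; case: (P x); case: (Q x).
Qed.

Definition gsz (f : T -> 'I_m) (i : 'I_m) := #|[set x | f x == i]|.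

Lemma dcount u f : hspec u f -> forall a b, gsz f b * C a b = gsz f a * C b a.
Proof.
move=> [_ [_ hc]] a b.
have E : forall c (x : T), f x = c -> forall d, C d c = \sum_(y | f y == d) e y x.
  move=> c x fx d; rewrite -(hc d c x fx).
  exact: (card_sum (fun y => e y x) (fun y => f y == d)).
rewrite /gsz -!sum_nat_const.
transitivity (\sum_(y in [set x | f x == b]) \sum_(x | f x == a) e x y).
  by apply: eq_bigr => y; rewrite inE => /eqP fy; rewrite (E b y fy).
transitivity (\sum_(x in [set x | f x == a]) \sum_(y | f y == b) e y x); last first.
  by apply: eq_bigr => x; rewrite inE => /eqP fx; rewrite (E a x fx).
rewrite (eq_bigl (fun y => f y == b)) => [|y]; last by rewrite inE.
rewrite [RHS](eq_bigl (fun y => f y == a)) => [|y]; last by rewrite inE.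
rewrite exchange_big /=; apply: eq_bigr => x _; apply: eq_bigr => y _.
by rewrite esym.
Qed.

Lemma sizes u u' f f' d : hspec u f -> hspec u' f' ->
  (forall y, y \in ball e d u) -> forall i, gsz f i = gsz f' i.
Proof.
move=> hs hs' hall.
have key : forall k i, i \in ball R k (f u) -> gsz f i = gsz f' i.
  elim=> [|k IH] i.
    have gr : forall w g, hspec w g -> gsz g (g w) = 1.
      move=> w g hg; rewrite /gsz -(cards1 w); apply: eq_card => x.
      by rewrite !inE (spec_eq hg).
    by rewrite in_ball0 => /eqP ->; rewrite gr // (spec_root hs hs') gr.
  rewrite in_ballS => /orP[/IH //|/existsP [a /andP[ab Rai]]].
  have h1 := dcount hs a i; have h2 := dcount hs' a i.
  apply/eqP; rewrite -(eqn_pmul2r Rai) h1 h2 (IH a ab) //.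
move=> i; have [_ [hsurj _]] := hs; have [y <-] := hsurj i.
by apply: (key d); rewrite -(ball_index hs).
Qed.

Lemma compl_count u f : hspec u f -> forall i j y, f y = j ->
  #|[set x | compl_graph e x y & f x == i]| = gsz f i - (i == j) - C i j.
Proof.
move=> hs i j y fy; have [_ [_ hc]] := hs.
have A : forall x, compl_graph e x y + ((x == y) + e x y) = 1.
  move=> x; rewrite /compl_graph; case: (eqVneq x y) => [->|nxy] /=; first by rewrite eirr.
  by case: (e x y).
have S : \sum_(x | f x == i) (compl_graph e x y + ((x == y) + e x y)) = gsz f i.
  rewrite /gsz -sum1_card; apply: eq_big => x; first by rewrite inE.
  by move=> _; exact: A.
rewrite !big_split /= in S.
have E1 : \sum_(x | f x == i) e x y = C i j.
  by rewrite -(hc i j y fy) (card_sum (fun x => e x y) (fun x => f x == i)).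
have E2 : \sum_(x | f x == i) (x == y) = (i == j).
  rewrite -fy; case: (eqVneq (f y) i) => [fyi|nfy].
    rewrite (bigD1 y (introT eqP fyi)) /=.
    rewrite eqxx big1 ?addn0 ?eqxx //.
    by move=> x /andP[_ /negbTE ->].
  rewrite big1 //.
  move=> x /eqP fx; case: eqP => // xy.
  by rewrite -xy fx eqxx in nfy.
rewrite (card_sum (fun x => compl_graph e x y) (fun x => f x == i)).
by rewrite -S E1 E2 -subnDA addnK.
Qed.

End G.

Theorem theorem4p1 (T : finType) (e : rel T) :
  simple_graph e ->
  highly_regular e ->
  (exists d, 3 <= d /\ has_diam e d) ->
  [/\ highly_regular (compl_graph e),
      has_diam (compl_graph e) 2
    & ~ distance_regular (compl_graph e)].
Proof.
move=> [esym eirr] [m [C [hm HC]]] [d [hd [hall [u0 [v0 hv0]]]]].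
have [f0 hs0] : exists f, hspec e C u0 f := HC u0.
case: d hd hall hv0 => [|d'] // hd hall hv0.
have nv0 : v0 \notin ball e 2 u0.
  move: hv0; rewrite /sphere in_setD => /andP[nb _].
  apply: contra nb; apply/subsetP; exact: ball_mono.
have far : forall u, exists w, w \notin ball e 2 u.
  move=> u; have [f hs] : exists f, hspec e C u f := HC u.
  have [_ [hsurj _]] := hs; have [w fw] := hsurj (f0 v0).
  by exists w; rewrite (ball_index hs) fw (spec_root hs hs0) -(ball_index hs0).
have diam2 : forall u v, v \in ball (compl_graph e) 2 u.
  move=> u v; case: (eqVneq v u) => [->|nvu].
    by apply: (subsetP (ball_mono _ _ (leq0n 2))); rewrite in_ball0.
  case: (boolP (e u v)) => euv; last first.
    apply: (subsetP (ball_mono _ _ (isT : 1 <= 2))).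
    by rewrite in_ball1 /compl_graph (negbTE nvu) /= eq_sym nvu euv.
  have [w nw] := far u.
  move: nw; rewrite in_ballS in_ball1 negb_or => /andP[/norP[nwu neuw] /existsPn nex].
  have nevw : ~~ e v w.
    by have := nex v; rewrite in_ball1 euv orbT.
  rewrite in_ballS; apply/orP; right; apply/existsP; exists w.
  rewrite in_ball1 /compl_graph (negbTE nwu) /= eq_sym nwu neuw /=.
  rewrite esym nevw andbT; apply/eqP => wv; by rewrite wv euv in neuw.
have [a [b [eua eab nbu neub]]] : exists a b, [/\ e u0 a, e a b, b != u0 & ~~ e u0 b].
  have ns : ~~ (ball e 2 u0 \subset ball e 1 u0).
    apply/negP => sub.
    have eq : ball e 2 u0 = ball e 1 u0.
      by apply/eqP; rewrite eqEsubset sub ball_sub.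
    have := ball_stab d' eq; rewrite add1n => E.
    have := hall u0 v0; rewrite E => h.
    by move: nv0; rewrite (subsetP (ball_sub _ _ _) _ h).
  case/subsetPn: ns => b hb2; rewrite in_ball1 negb_or => /andP[nbu neub].
  move: hb2; rewrite in_ballS in_ball1 (negbTE nbu) (negbTE neub) /=.
  case/existsP => a /andP[]; rewrite in_ball1 => /orP[/eqP -> h|eua eab].
    by rewrite h in neub.
  by exists a, b.
have sph1 : forall v x, (x \in sphere (compl_graph e) 1 v) = compl_graph e v x.
  move=> v x; rewrite /sphere in_setD in_ball1 in_ball0.
  by case: (eqVneq x v) => [->|nxv] //=; rewrite /compl_graph eqxx.
have sph2 : forall u x, (x \in sphere (compl_graph e) 2 u) = e u x.
  move=> u x; rewrite /sphere in_setD diam2 andbT in_ball1 negb_or /compl_graph.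
  case: (eqVneq x u) => [->|nxu]; first by rewrite eirr.
  by rewrite /= negbK.
split.
- exists m, (fun i j => gsz f0 i - (i == j) - C i j); split => //.
  move=> u; have [f hs] : exists f, hspec e C u f := HC u.
  exists f; have [h0 [hsurj hc]] := hs; do 2!split => //.
  move=> i j y fy; rewrite (compl_count eirr hs i fy).
  by rewrite (sizes esym hs hs0 (hall u)).
- split; first exact: diam2.
  exists a, b; rewrite /sphere in_setD diam2 andbT in_ball1 negb_or /compl_graph eab.
  by rewrite andbF andbT; apply/eqP => ba; rewrite ba eirr in eab.
- move=> [_ hdr].
  have hb : b \in sphere (compl_graph e) 1 u0.
    by rewrite sph1 /compl_graph eq_sym nbu neub.
  have [nv0u nev0 farx] : [/\ v0 != u0, ~~ e u0 v0 &
      forall x, e u0 x -> (v0 != x) && ~~ e v0 x].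
    move: nv0; rewrite in_ballS in_ball1 negb_or => /andP[/norP[nv0u nev0] /existsPn nex].
    split => // x ex; apply/andP; split.
      by apply/eqP => vx; move: nev0; rewrite vx ex.
    by have := nex x; rewrite in_ball1 ex orbT /= esym.
  have hv : v0 \in sphere (compl_graph e) 1 u0.
    by rewrite sph1 /compl_graph eq_sym nv0u nev0.
  have [_ _ H] := hdr 1 u0 b u0 v0 hb hv.
  set A := _ :&: _ in H; set B := _ :&: _ in H.
  have aB : a \in B by rewrite /B in_setI sph1 sph2 eua andbT /compl_graph farx.
  have sAB : A \subset B :\ a.
    apply/subsetP => x; rewrite /A in_setD1 !in_setI !sph1 !sph2 /compl_graph => /andP[/andP[bx nebx] ex].
    rewrite ex andbT farx // andbT; apply/eqP => xa.
    by move: nebx; rewrite xa esym eab.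
  have := subset_leq_card sAB; rewrite H (cardsD1 a B) aB.
  by rewrite add1n ltnn.
Qed.
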